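(* Let $G$ be a Frattini-injective pro-$p$ group and let $H$ be a finitely generated subgroup of $G$. Then $N_G(H) = N_G(\Phi(H))$. In particular, $H$ is normal in $G$ if and only if $\Phi(H)$ is normal in $G$.
   Context: $p$ is a prime; subgroups are closed. $\Phi(H)$ is the Frattini subgroup and $N_G(\cdot)$ the normalizer. A pro-$p$ group $G$ is Frattini-injective if distinct finitely generated subgroups of $G$ have distinct Frattini subgroups. *)

(* Defs.v *)
From HB Require Import structures.
From mathcomp Require Import all_boot all_order all_algebra.
From mathcomp Require Import all_classical all_reals all_analysis.

Set Implicit Arguments.
Unset Strict Implicit.
Unset Printing Implicit Defensive.

Local Open Scope classical_set_scope.

Section ProP.
Variables (G : topologicalType) (mul : G -> G -> G) (inv : G -> G) (one : G).

Definition group_axioms : Prop :=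
  [/\ forall x y z, mul x (mul y z) = mul (mul x y) z,
      forall x, mul one x = x, forall x, mul x one = x,
      forall x, mul (inv x) x = one & forall x, mul x (inv x) = one].

Definition topological_group : Prop :=
  [/\ group_axioms,
      continuous (fun z : G * G => mul z.1 z.2) & continuous inv].

Definition is_subgroup (H : set G) : Prop :=
  [/\ H one, forall x y, H x -> H y -> H (mul x y) & forall x, H x -> H (inv x)].

Definition closed_subgroup (H : set G) : Prop := is_subgroup H /\ closed H.
Definition open_subgroup (H : set G) : Prop := is_subgroup H /\ open H.

Definition conj_set (g : G) (H : set G) : set G :=
  [set mul (mul g h) (inv g) | h in H].

Definition normal (H : set G) : Prop := forall g, conj_set g H = H.

Definition normalizer (H : set G) : set G := [set g | conj_set g H = H].

(* the index of N in G is p^k: there are exactly p^k left cosets of N *)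
Definition index_is (N : set G) (n : nat) : Prop :=
  exists f : 'I_n -> G,
    (forall x, exists i, N (mul (inv (f i)) x)) /\
    (forall i j, N (mul (inv (f i)) (f j)) -> i = j).

Definition pro_p_group (p : nat) : Prop :=
  [/\ prime p, topological_group,
      compact [set: G], hausdorff_space G /\ totally_disconnected [set: G] &
      forall N, open_subgroup N -> normal N -> exists k, index_is N (p ^ k)].

Definition closed_gen (X : set G) : set G :=
  [set x | forall K, closed_subgroup K -> X `<=` K -> K x].

Definition finitely_generated (H : set G) : Prop :=
  exists X : set G, finite_set X /\ H = closed_gen X.

Definition maximal_open_subgroup (H M : set G) : Prop :=
  [/\ is_subgroup M, M `<=` H, M <> H,
      (exists U : set G, open U /\ M = H `&` U) &
      forall K, is_subgroup K -> M `<=` K -> K `<=` H -> K = M \/ K = H].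

Definition frattini (H : set G) : set G :=
  [set x | H x /\ forall M, maximal_open_subgroup H M -> M x].

Definition frattini_injective : Prop :=
  forall H K, closed_subgroup H -> closed_subgroup K ->
    finitely_generated H -> finitely_generated K ->
    frattini H = frattini K -> H = K.

End ProP.

(* Main.v *)
Require Import Defs.
From mathcomp Require Import all_boot all_order all_algebra.
From mathcomp Require Import all_classical all_reals all_analysis.

Set Implicit Arguments.
Unset Strict Implicit.
Unset Printing Implicit Defensive.
Local Open Scope classical_set_scope.

Section Aux.
Variables (G : topologicalType) (mul : G -> G -> G) (inv : G -> G) (one : G).
Hypothesis GA : group_axioms mul inv one.

Lemma inv_uniq a b : mul a b = one -> b = inv a.
Proof.
case: GA => mA m1 m1' mV mV' E.
by rewrite -[b]m1 -(mV a) -mA E m1'.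
Qed.

Lemma invK a : inv (inv a) = a.
Proof. case: GA => _ _ _ mV _; by rewrite -(inv_uniq (mV a)). Qed.

Definition iso (f h : G -> G) :=
  [/\ cancel f h, cancel h f, forall x y, f (mul x y) = mul (f x) (f y),
      continuous f & continuous h].

Lemma iso_sym f h : iso f h -> iso h f.
Proof.
case=> fK hK fM cf ch; split => // x y.
by rewrite -{1}(hK x) -{1}(hK y) -fM fK.
Qed.

Lemma hom_one f : iso f f -> True. Proof. by []. Qed.

Lemma iso_one f h : iso f h -> f one = one.
Proof.
move=> [fK hK fM _ _]; case: GA => mA m1 m1' mV mV'.
have E : f one = mul (f one) (f one) by rewrite -fM m1.
transitivity (mul (mul (inv (f one)) (f one)) (f one)); first by rewrite mV m1.
by rewrite -mA -E mV.
Qed.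

Lemma iso_inv f h : iso f h -> forall x, f (inv x) = inv (f x).
Proof.
move=> I x; apply: inv_uniq.
case: (I) => _ _ fM _ _; case: GA => _ _ _ _ mV'.
by rewrite -fM mV' (iso_one I).
Qed.

Lemma sub_pre f h H : iso f h -> is_subgroup mul inv one H ->
  is_subgroup mul inv one (f @^-1` H).
Proof.
move=> I [H1 HM HV]; case: (I) => _ _ fM _ _; split.
- by rewrite /preimage /= (iso_one I).
- by move=> x y /= Hx Hy; rewrite fM; apply: HM.
- by move=> x /= Hx; rewrite (iso_inv I); apply: HV.
Qed.

Lemma closed_pre f h H : iso f h -> closed H -> closed (f @^-1` H).
Proof.
case=> _ _ _ cf _ cH; by apply: preimage_closed => // x _; apply: cf.
Qed.

Lemma open_pre f h H : iso f h -> open H -> open (f @^-1` H).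
Proof.
case=> _ _ _ cf _ cH; by apply: open_comp => // x _; apply: cf.
Qed.

Lemma csub_pre f h H : iso f h -> closed_subgroup mul inv one H ->
  closed_subgroup mul inv one (f @^-1` H).
Proof. by move=> I [s c]; split; [apply: sub_pre I s| apply: closed_pre I c]. Qed.

Lemma pre_pre f h S : iso f h -> h @^-1` (f @^-1` S) = S.
Proof.
case=> _ hK _ _ _; apply/seteqP; split => x /=; by rewrite hK.
Qed.

Lemma closed_gen_pre f h X : iso f h ->
  f @^-1` closed_gen mul inv one X = closed_gen mul inv one (f @^-1` X).
Proof.
move=> I; have I' := iso_sym I; case: (I) => fK hK _ _ _.
apply/seteqP; split => x /=.
- move=> Hx K cK XK.
  have := Hx (h @^-1` K) (csub_pre I' cK).
  rewrite /= fK; apply => y Xy /=; apply: XK; by rewrite /= hK.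
- move=> Hx K cK XK.
  apply: (Hx (f @^-1` K) (csub_pre I cK)) => y /= Xy; exact: XK.
Qed.

Lemma fg_pre f h H : iso f h -> finitely_generated mul inv one H ->
  finitely_generated mul inv one (f @^-1` H).
Proof.
move=> I [X [fX ->]]; exists (f @^-1` X); split; last exact: closed_gen_pre I.
have -> : f @^-1` X = [set h x | x in X].
  case: I => fK hK _ _ _.
  apply/seteqP; split => x /=.
  - by move=> Xfx; exists (f x) => //; rewrite fK.
  - by case=> y Xy <-; rewrite hK.
exact: finite_image.
Qed.

Lemma max_pre f h H M : iso f h -> maximal_open_subgroup mul inv one H M ->
  maximal_open_subgroup mul inv one (f @^-1` H) (f @^-1` M).
Proof.
move=> I [sM MH MneH [U [oU MU]] mx]; have I' := iso_sym I.
case: (I) => fK hK _ _ _.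
split.
- exact: sub_pre I sM.
- by move=> x /= /MH.
- by move=> E; apply: MneH; rewrite -(pre_pre M I) E pre_pre.
- exists (f @^-1` U); split; first exact: open_pre I oU.
  by rewrite MU.
- move=> K sK MK KH.
  have sK' := sub_pre I' sK.
  have [||E|E] := mx (h @^-1` K) sK'.
  + by move=> y My; apply: MK; rewrite /= hK.
  + by move=> y /= Ky; have := KH _ Ky; rewrite /= hK.
  + by left; rewrite -E pre_pre.
  + by right; rewrite -E pre_pre.
Qed.

Lemma frattini_pre f h H : iso f h ->
  f @^-1` frattini mul inv one H = frattini mul inv one (f @^-1` H).
Proof.
move=> I; have I' := iso_sym I; case: (I) => fK hK _ _ _.
apply/seteqP; split => x /=.
- case=> Hx Mx; split => // M' mM'.
  have := max_pre I' mM'; rewrite (pre_pre _ I) => /Mx /=; by rewrite fK.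
- case=> Hx Mx; split => // M mM.
  exact: (Mx _ (max_pre I mM)).
Qed.

Definition cj (g : G) x := mul (mul g x) (inv g).

Lemma cj_iso (cm : continuous (fun z : G * G => mul z.1 z.2)) a :
  iso (cj a) (cj (inv a)).
Proof.
have cl b : continuous (fun x => mul b x).
  move=> x; apply: (continuous_comp (f := fun x => (b, x))
                      (g := fun z : G * G => mul z.1 z.2)); last exact: cm.
  by apply: cvg_pair; [apply: cvg_cst | apply: cvg_id].
have cr b : continuous (fun x => mul x b).
  move=> x; apply: (continuous_comp (f := fun x => (x, b))
                      (g := fun z : G * G => mul z.1 z.2)); last exact: cm.
  by apply: cvg_pair; [apply: cvg_id | apply: cvg_cst].
have cc b : continuous (cj b).
  move=> x; apply: (continuous_comp (f := fun x => mul b x)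
                      (g := fun y => mul y (inv b))); [exact: cl | exact: cr].
case: GA => mA m1 m1' mV mV'.
split; [| | | exact: cc | exact: cc].
- by move=> x; rewrite /cj invK !mA mV m1 -mA mV m1'.
- by move=> x; rewrite /cj invK !mA mV' m1 -mA mV' m1'.
- by move=> x y; rewrite /cj !mA -(mA (mul a x) (inv a)) mV m1'.
Qed.

Lemma conj_pre g H : conj_set mul inv g H = cj (inv g) @^-1` H.
Proof.
case: GA => mA m1 m1' mV mV'.
apply/seteqP; split => x /=.
- by case=> y Hy <-; rewrite /cj invK !mA mV m1 -mA mV m1'.
- move=> Hx; exists (cj (inv g) x) => //.
  by rewrite /cj invK !mA mV' m1 -mA mV' m1'.
Qed.

End Aux.

Theorem mainTheorem14 (p : nat) (G : topologicalType) (mul : G -> G -> G)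
  (inv : G -> G) (one : G) :
  pro_p_group mul inv one p ->
  frattini_injective mul inv one ->
  forall H : set G, closed_subgroup mul inv one H ->
    finitely_generated mul inv one H ->
    normalizer mul inv H = normalizer mul inv (frattini mul inv one H) /\
    (normal mul inv H <-> normal mul inv (frattini mul inv one H)).
Proof.
move=> [_ [GA cm _] _ _ _] FI H cH fgH.
have I g := cj_iso GA cm (inv g).
have E : normalizer mul inv H = normalizer mul inv (frattini mul inv one H).
  apply/seteqP; split => g /=.
  - rewrite /normalizer /= !(conj_pre GA) => E.
    by rewrite (frattini_pre GA _ (I g)) E.
  - rewrite /normalizer /= !(conj_pre GA) (frattini_pre GA _ (I g)) => E.
    apply: FI => //; [exact: csub_pre (I g) cH | exact: fg_pre (I g) fgH].
split => //.
split => N g.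
- have : normalizer mul inv H g by exact: N.
  by rewrite E.
- have : normalizer mul inv (frattini mul inv one H) g by exact: N.
  by rewrite -E.
Qed.
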